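(* Let $(L,A)$ be a semilattice diagram in $\mathbf{BAlg}_1$ and suppose the convolution algebra $\ell^1(L)$ has an identity element $u=\sum_{e\in L}\lambda_e e$ (with $\sum_e|\lambda_e|<\infty$). Then for every $x\in\mathcal A(L,A)$ we have $u\cdot x=x=x\cdot u$, where $\cdot$ denotes the $\ell^1(L)$-module action on $\mathcal A(L,A)$ described in the context.
   Context: A semilattice is a commutative semigroup $L$ in which every element is idempotent; it is partially ordered by $f\preceq e\iff ef=f$. $\ell^1(L)$ denotes the $\ell^1$-convolution algebra of the semigroup $L$. A semilattice diagram in $\mathbf{BAlg}_1$, written $(L,A)$, consists of a semilattice $L$, Banach algebras $(A_e)_{e\in L}$, and contractive algebra homomorphisms $\phi_{f,e}:A_e\to A_f$ for all $f\preceq e$ in $L$, such that $\phi_{e,e}=\mathrm{id}$ and $\phi_{g,f}\circ\phi_{f,e}=\phi_{g,e}$ whenever $g\preceq f\preceq e$. Its convolution algebra $\mathcal A(L,A)$ is the $\ell^1$-direct sum $\bigoplus^{\ell^1}_{e\in L}A_e$, with canonical inclusions $\iota_e:A_e\to\mathcal A(L,A)$, equipped with the bounded bilinear product determined by $\iota_e(a)\cdot\iota_f(b)=\iota_{ef}\big(\phi_{ef,e}(a)\phi_{ef,f}(b)\big)$ for $a\in A_e$, $b\in A_f$. The symmetric action of $\ell^1(L)$ on $\mathcal A(L,A)$ is the bounded bilinear action determined by $e\cdot\iota_i(a)=\iota_i(a)\cdot e=\iota_{ie}\phi_{ie,i}(a)$ for $i,e\in L$, $a\in A_i$. *)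

(* Defs.v *)
From HB Require Import structures.
From mathcomp Require Import all_boot all_order all_algebra finmap.
From mathcomp Require Import all_classical all_reals all_analysis.
Unset Strict Implicit. Unset Printing Implicit Defensive.
Import Order.TTheory GRing.Theory Num.Theory.
Import numFieldNormedType.Exports.
Local Open Scope ring_scope.
Local Open Scope classical_set_scope.

Local Open Scope fset_scope.
Definition totally {I : choiceType} : set_system {fset I} :=
  filter_from setT (fun A => [set B | A `<=` B]).

Definition partial_sum {I : choiceType} {V : zmodType} (x : I -> V)
  (J : {fset I}) : V := \sum_(i : J) x (val i).
Local Close Scope fset_scope.

Definition has_usum {I : choiceType} {K : numFieldType} {V : normedModType K}
  (x : I -> V) (s : V) : Prop :=
  (partial_sum x @ totally) --> s.

(* [l1fam x] : sum_i ||x i|| < oo, for a (possibly dependent) family of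
   vectors, given through the family of its norms. *)
Definition l1fam {I : choiceType} {K : numFieldType} (nx : I -> K) : Prop :=
  exists M : K, forall J : {fset I}, partial_sum nx J <= M.

Record semilattice := Semilattice {
  sl_car :> choiceType;
  sl_op : sl_car -> sl_car -> sl_car;
  sl_opA : associative sl_op;
  sl_opC : commutative sl_op;
  sl_opI : idempotent_op sl_op }.
Arguments sl_op {s}.

Definition sl_le {L : semilattice} (f e : L) : bool := sl_op e f == f.

Record BanachAlg (K : numFieldType) := BanachAlgebra {
  ba_car :> completeNormedModType K;
  ba_mul : ba_car -> ba_car -> ba_car;
  ba_mulA : associative ba_mul;
  ba_mulDl : forall a b c, ba_mul (a + b) c = ba_mul a c + ba_mul b c;
  ba_mulDr : forall a b c, ba_mul a (b + c) = ba_mul a b + ba_mul a c;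
  ba_mulZl : forall (k : K) a b, ba_mul (k *: a) b = k *: ba_mul a b;
  ba_mulZr : forall (k : K) a b, ba_mul a (k *: b) = k *: ba_mul a b;
  ba_normM : forall a b, `|ba_mul a b| <= `|a| * `|b| }.
Arguments ba_mul {K b0} : rename.

(* ---------- Semilattice diagrams in BAlg_1 ----------
   The connecting maps are given as a total family [phi f e : A e -> A f];
   only the maps with f <= e are meaningful, and all axioms are imposed only
   for those. *)
Record sl_diagram (K : numFieldType) (L : semilattice) := SlDiagram {
  dg_alg : L -> BanachAlg K;
  dg_phi : forall f e : L, dg_alg e -> dg_alg f;
  dg_phiD : forall f e, sl_le f e -> forall a b,
      dg_phi f e (a + b) = dg_phi f e a + dg_phi f e b;
  dg_phiZ : forall f e, sl_le f e -> forall (k : K) a,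
      dg_phi f e (k *: a) = k *: dg_phi f e a;
  dg_phiM : forall f e, sl_le f e -> forall a b,
      dg_phi f e (ba_mul a b) = ba_mul (dg_phi f e a) (dg_phi f e b);
  dg_phi_contr : forall f e, sl_le f e -> forall a, `|dg_phi f e a| <= `|a|;
  dg_phi_id : forall e a, dg_phi e e a = a;
  dg_phi_comp : forall g f e, sl_le g f -> sl_le f e -> forall a,
      dg_phi g f (dg_phi f e a) = dg_phi g e a }.
Arguments dg_alg {K L}.
Arguments dg_phi {K L}.

Definition in_l1 {K : numFieldType} {L : semilattice} (u : L -> K) : Prop :=
  l1fam (fun e => `|u e|).

(* terms of the convolution (u * v)(g) = sum_{(e,f) : e f = g} u(e) v(f) *)
Definition conv_terms {K : numFieldType} {L : semilattice} (u v : L -> K)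
  (g : L) : L * L -> K^o :=
  fun p => if sl_op p.1 p.2 == g then u p.1 * v p.2 else 0.

Definition l1_identity {K : numFieldType} {L : semilattice} (u : L -> K) : Prop :=
  in_l1 u /\
  forall v : L -> K, in_l1 v ->
    forall g : L, has_usum (conv_terms u v g) (v g : K^o)
               /\ has_usum (conv_terms v u g) (v g : K^o).

(* elements: families x = (x_e)_e, x_e in A_e, with sum_e ||x_e|| < oo
   (x = sum_e iota_e(x_e)) *)
Definition in_convalg {K : numFieldType} {L : semilattice} (D : sl_diagram K L)
  (x : forall e : L, dg_alg D e) : Prop :=
  l1fam (fun e => `|x e|).

(* The symmetric action of l^1(L) on A(L,A), being the bounded bilinear
   extension of  e . iota_i(a) = iota_i(a) . e = iota_{ie}(phi_{ie,i} a),
   has f-component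
     (u . x)_f = (x . u)_f = sum_{(e,i) : i e = f} u(e) phi_{f,i}(x_i). *)
Definition left_act_terms {K : numFieldType} {L : semilattice} (D : sl_diagram K L)
  (u : L -> K) (x : forall e : L, dg_alg D e) (f : L) : L * L -> dg_alg D f :=
  fun p => (* p = (e, i) *)
    if sl_op p.2 p.1 == f then u p.1 *: dg_phi D f p.2 (x p.2) else 0.

Definition right_act_terms {K : numFieldType} {L : semilattice} (D : sl_diagram K L)
  (x : forall e : L, dg_alg D e) (u : L -> K) (f : L) : L * L -> dg_alg D f :=
  fun p => (* p = (i, e) *)
    if sl_op p.1 p.2 == f then u p.2 *: dg_phi D f p.1 (x p.1) else 0.

Definition left_act_is {K : numFieldType} {L : semilattice} (D : sl_diagram K L)
  (u : L -> K) (x y : forall e : L, dg_alg D e) : Prop :=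
  forall f : L, has_usum (left_act_terms D u x f) (y f).

Definition right_act_is {K : numFieldType} {L : semilattice} (D : sl_diagram K L)
  (x : forall e : L, dg_alg D e) (u : L -> K) (y : forall e : L, dg_alg D e) : Prop :=
  forall f : L, has_usum (right_act_terms D x u f) (y f).

(* Main.v *)
Require Import Defs.
From HB Require Import structures.
From mathcomp Require Import all_boot all_order all_algebra finmap.
From mathcomp Require Import all_classical all_reals all_analysis.
Import Order.TTheory GRing.Theory Num.Theory.
Import numFieldNormedType.Exports.
Local Open Scope ring_scope.

Lemma psE {I : choiceType} {V : zmodType} (x : I -> V) (J : {fset I}) :
  partial_sum x J = \sum_(p <- J) x p.
Proof. by rewrite /partial_sum big_seq_fsetE. Qed.

Lemma usumP {I : choiceType} {K : numFieldType} {V : normedModType K}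
  (x : I -> V) (s : V) : has_usum x s <->
  (forall e : K, 0 < e -> exists J0 : {fset I}, forall J : {fset I},
     (J0 `<=` J)%fset -> `|s - \sum_(p <- J) x p| < e).
Proof.
split.
- move=> H e e0.
  have /H : nbhs s (ball s e) by apply: nbhsx_ballx.
  move=> [J0 _ HJ0]; exists J0 => J HJ.
  by have := HJ0 J HJ; rewrite /= -ball_normE /= psE.
- move=> H A /nbhs_ballP [e e0 sA].
  have [J0 HJ0] := H e e0.
  exists J0 => // J HJ; apply: sA; rewrite -ball_normE /= psE; exact: HJ0.
Qed.

Lemma big_group {T : eqType} {I : Type} {V : zmodType} (r : seq I) (s : seq T)
  (P : pred I) (k : I -> T) (F : I -> V) : uniq s ->
  (forall p, P p -> k p \in s) ->
  \sum_(p <- r | P p) F p = \sum_(d <- s) \sum_(p <- r | P p && (k p == d)) F p.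
Proof.
move=> us Hk; rewrite [RHS](exchange_big_dep P) /=; last by move=> ? ? _ /andP[].
apply: eq_bigr => p Pp.
rewrite Pp /= -big_filter.
have -> : [seq i <- s | k p == i] = [:: k p].
  rewrite (@eq_filter _ _ (pred1 (k p))); first exact: filter_pred1_uniq (Hk _ Pp).
  by move=> x /=; rewrite eq_sym.
by rewrite big_seq1.
Qed.

Lemma big_single {I : eqType} {V : zmodType} (r : seq I) (q : I) (F : I -> V) :
  uniq r -> q \in r -> \sum_(p <- r | p == q) F p = F q.
Proof.
move=> ur qr; rewrite -big_filter.
have -> : [seq p <- r | p == q] = [:: q].
  rewrite (@eq_filter _ _ (pred1 q)) //; exact: filter_pred1_uniq.
by rewrite big_seq1.
Qed.

Lemma big_fsetU_disj {I : choiceType} {V : zmodType} (A B : {fset I}) (F : I -> V) :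
  (forall x, x \in B -> x \notin A) ->
  \sum_(p <- (A `|` B)%fset) F p = \sum_(p <- A) F p + \sum_(p <- B) F p.
Proof.
move=> dAB; rewrite (big_fsetID _ (mem A)) /=; congr (_ + _); apply: eq_fbigl => x;
  rewrite !inE /=.
  by case: (x \in A); rewrite ?andbT ?andbF.
case: (boolP (x \in A)) => xA /=; rewrite ?andbT ?andbF ?orbT ?orbF //.
by apply/esym/negP => /dAB; rewrite xA.
Qed.

Lemma eq_of_small {K : numFieldType} {V : normedModType K} (a b : V) :
  (forall e : K, 0 < e -> `|a - b| < e) -> a = b.
Proof.
move=> H; apply/eqP; rewrite -subr_eq0 -normr_eq0; apply/negPn/negP => ne.
have hp : 0 < `|a - b| by rewrite lt0r ne normr_ge0.
by have := H _ hp; rewrite ltxx.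
Qed.

Section SL.
Variable L : semilattice.
Implicit Types a b c d e g : L.

Lemma opA : associative (@sl_op L). Proof. exact: sl_opA. Qed.
Lemma opC : commutative (@sl_op L). Proof. exact: sl_opC. Qed.
Lemma opI : idempotent_op (@sl_op L). Proof. exact: sl_opI. Qed.

Lemma opACl a b c : sl_op (sl_op a b) c = sl_op b (sl_op a c).
Proof. by rewrite (opC a b) -opA. Qed.

Lemma sl_leE a b : sl_le a b = (sl_op b a == a). Proof. by []. Qed.

Lemma sl_le_trans a b c : sl_le a b -> sl_le b c -> sl_le a c.
Proof.
rewrite !sl_leE => /eqP ab /eqP bc; apply/eqP.
by rewrite -{1}ab opA bc ab.
Qed.

Lemma sl_le_opl d e : sl_le (sl_op d e) d.
Proof. by rewrite sl_leE opA opI. Qed.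

Lemma sl_le_opr d e : sl_le (sl_op d e) e.
Proof. by rewrite opC; exact: sl_le_opl. Qed.

Lemma sl_le_refl a : sl_le a a. Proof. by rewrite sl_leE opI. Qed.

Lemma sl_le_op_of a b c : sl_le c a -> sl_le c b -> sl_le c (sl_op a b).
Proof.
rewrite !sl_leE => /eqP ac /eqP bc; apply/eqP.
by rewrite -opA bc ac.
Qed.

End SL.
Arguments opA {L}. Arguments opC {L}. Arguments opI {L}. Arguments opACl {L}.
Arguments sl_leE {L}. Arguments sl_le_trans {L a b c}. Arguments sl_le_opl {L}.
Arguments sl_le_opr {L}. Arguments sl_le_refl {L}. Arguments sl_le_op_of {L a b c}.

Definition fs {K : numFieldType} {L : semilattice} (s : seq (K * L)) (h : L) : K :=
  \sum_(p <- s) p.1 * (p.2 == h)%:R.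

Lemma fs_out {K : numFieldType} {L : semilattice} (s : seq (K * L)) h :
  h \notin [seq p.2 | p <- s] -> fs s h = 0.
Proof.
move=> hn; rewrite /fs big_seq big1 // => p ps.
case: eqP => [e|]; last by rewrite mulr0.
by move: hn; rewrite -e (map_f _ ps).
Qed.

Lemma in_l1_fs {K : numFieldType} {L : semilattice} (s : seq (K * L)) :
  in_l1 (fs s).
Proof.
exists (\sum_(p <- s) `|p.1|) => J; rewrite psE.
apply: (le_trans (y := \sum_(h <- J) \sum_(p <- s) `|p.1| * (p.2 == h)%:R)).
  apply: ler_sum => h _; rewrite /fs.
  apply: (le_trans (ler_norm_sum _ _ _)); apply: ler_sum => p _.
  by rewrite normrM normr_nat.
rewrite exchange_big /=; apply: ler_sum => p _.
rewrite -mulr_sumr; apply: ler_piMr => //.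
case: (boolP (p.2 \in (J : seq L))) => pJ.
  rewrite (bigD1_seq p.2) ?fset_uniq //= eqxx big1 ?addr0 //.
  by move=> h /negbTE; rewrite eq_sym => ->.
rewrite big_seq big1 ?ler01 // => h hJ; case: eqP => // e.
by move: pJ; rewrite e hJ.
Qed.

Lemma rect {I : choiceType} {T1 T2 : eqType} {V : zmodType} (a : I -> T1) (b : I -> T2)
  (mk : T1 -> T2 -> I)
  (Hmk : forall p, mk (a p) (b p) = p) (Ha : forall x y, a (mk x y) = x)
  (Hb : forall x y, b (mk x y) = y)
  (J : {fset I}) (A : seq T1) (B : seq T2) (F : I -> V) :
  uniq A -> uniq B -> (forall x y, x \in A -> y \in B -> mk x y \in J) ->
  \sum_(p <- J | (a p \in A) && (b p \in B)) F p =
  \sum_(x <- A) \sum_(y <- B) F (mk x y).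
Proof.
move=> uA uB HJ.
rewrite (big_group _ A _ a) //; last by move=> p /andP[].
apply: eq_big_seq => x xA.
rewrite (big_group _ B _ b) //; last by move=> p /andP[/andP[]].
apply: eq_big_seq => y yB.
rewrite (eq_bigl (fun p => p == mk x y)); first exact: big_single (fset_uniq _) (HJ _ _ xA yB).
move=> p /=; case: (boolP (p == mk x y)) => [/eqP -> | ne].
  by rewrite Ha Hb xA yB !eqxx.
apply/negP => /andP[/andP[_ ax] bx].
by move: ne; rewrite -(Hmk p) (eqP ax) (eqP bx) eqxx.
Qed.

Section Mob.
Variables (K : numFieldType) (L : semilattice).

Fixpoint mob (s : seq L) : seq (K * L) :=
  match s with
  | [::] => [::]
  | c :: s' => (1, c) :: (mob s' ++ [seq (- p.1, sl_op c p.2) | p <- mob s'])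
  end.

Definition Pm (s : seq L) (e g : L) : K :=
  \sum_(p <- mob s) p.1 * (sl_op p.2 e == g)%:R.

Lemma Pm_cons c s e g :
  Pm (c :: s) e g = (sl_op c e == g)%:R + Pm s e g - Pm s (sl_op c e) g.
Proof.
rewrite /Pm /= big_cons big_cat big_map /= mul1r addrA; congr (_ + _ + _).
rewrite -sumrN; apply: eq_bigr => p _.
by rewrite opACl mulNr.
Qed.

Lemma PmP s e g : has (sl_le e) s -> Pm s e g = (e == g)%:R.
Proof.
elim: s e => [|c s IH] e //= /orP [ec|hs].
  by rewrite Pm_cons (eqP ec) addrK.
rewrite Pm_cons IH // IH; first by rewrite addrC addKr.
move: hs => /hasP [c' c's ec']; apply/hasP; exists c' => //.
apply: sl_le_trans ec'; exact: sl_le_opr.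
Qed.

Lemma PmP2 s f e g : sl_le f g -> (forall i, sl_le f i -> has (sl_le i) s) ->
  Pm s e g = (e == g)%:R.
Proof.
move=> fg cov; case: (boolP (sl_le f e)) => fe; first exact/PmP/cov.
have eg : (e == g) = false.
  by apply/negP => /eqP eg; move: fe; rewrite eg fg.
rewrite eg /Pm big1 // => p _.
case: eqP => [de|]; last by rewrite mulr0.
by move: fe; rewrite (sl_le_trans fg) // -de; exact: sl_le_opr.
Qed.

End Mob.
Arguments mob K {L}. Arguments Pm K {L}. Arguments PmP2 K {L s f e g}. Arguments PmP K {L s e g}.

Section Main.
Variables (K : numFieldType) (L : semilattice) (u : L -> K).
Hypothesis Hu : l1_identity u.

Definition delta (i : L) : L -> K := fs [:: (1, i)].

Lemma deltaE i h : delta i h = (i == h)%:R.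
Proof. by rewrite /delta /fs big_seq1 mul1r. Qed.

Lemma Hd i : has_usum (conv_terms u (delta i) i) (1 : K^o).
Proof.
have := (Hu.2 (delta i) (in_l1_fs _) i).1.
by rewrite deltaE eqxx.
Qed.

Lemma cover f : exists E0 : seq L, forall i, sl_le f i -> has (sl_le i) E0.
Proof.
pose e := (3%:R : K)^-1.
have e0 : 0 < e by rewrite invr_gt0 ltr0n.
have [X0 HX0] := (usumP _ _).1 (Hd f) e e0.
exists [seq p.1 | p <- X0] => i fi.
apply/negPn/negP => /hasPn nE.
have [X1 HX1] := (usumP _ _).1 (Hd i) e e0.
pose X1' := [fset q in X1 | (q.2 == i) && sl_le i q.1]%fset.
pose Y := [fset (q.1, f) | q in X1']%fset.
have dis : forall x, x \in Y -> x \notin X0.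
  move=> x /imfsetP [q qX1' ->]; apply/negP => qX0.
  have := nE q.1; rewrite (map_f (fun p => p.1) qX0) => /(_ isT).
  by move: qX1'; rewrite !inE => /andP[_ /andP[_ ->]].
have sumY : \sum_(p <- Y) conv_terms u (delta f) f p =
            \sum_(p <- X1) conv_terms u (delta i) i p.
  rewrite big_imfset /=; last first.
    move=> q1 q2; rewrite !inE => /andP[_ /andP[/eqP q1i _]] /andP[_ /andP[/eqP q2i _]].
    case=> h; move: q1 q2 q1i q2i h => [? ?] [? ?] /= -> -> ->; done.
  rewrite (@eq_fbigr _ _ _ _ X1' _ _ (conv_terms u (delta i) i)); last first.
    move=> q; rewrite !inE => /andP[_ /andP[/eqP q2 iq]] _.
    rewrite /conv_terms /= !deltaE q2 eqxx (eqP iq) eqxx.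
    by rewrite -sl_leE (sl_le_trans fi iq).
  apply: big_fset_incl; first by apply/fsubsetP => q; rewrite !inE => /andP[].
  move=> p pX1; rewrite !inE pX1 /= /conv_terms deltaE.
  move=> hn; case: eqP => [e1|] //; case: eqP => [e2|]; last by rewrite mulr0.
  by move: hn e1; rewrite -e2 eqxx /= sl_leE => /negP hn e1; exfalso; apply: hn; apply/eqP.
have h1 := HX0 X0 (fsubset_refl _).
have h2 := HX0 (X0 `|` Y)%fset (fsubsetUl _ _).
have h3 := HX1 X1 (fsubset_refl _).
rewrite big_fsetU_disj // sumY in h2.
move: h1 h2 h3.
set S0 := \sum_(p <- X0) _; set S1 := \sum_(p <- X1) _ => h1 h2 h3.
have hY : `|S1| < e + e.
  have -> : S1 = (1 - S0) - (1 - (S0 + S1)) by rewrite opprB addrC addrA addrNK addrC addKr.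
  by apply: (le_lt_trans (ler_normB _ _)); apply: ltrD.
have : (1 : K) < e + e + e.
  have -> : (1 : K) = `|(1 - S1) + S1 : K^o| by rewrite subrK normr1.
  by apply: (le_lt_trans (ler_normD _ _)); rewrite -addrA; apply: ltrD.
by rewrite -mulr2n -mulrSr -mulr_natl mulfV ?ltxx // pnatr_eq0.
Qed.


Lemma u_fs f E0 : (forall i, sl_le f i -> has (sl_le i) E0) ->
  forall g, sl_le f g -> u g = fs (mob K E0) g.
Proof.
move=> cov g fg; pose v := fs (mob K E0).
have H := (Hu.2 v (in_l1_fs _) g).1.
apply/esym/eq_of_small => e e0.
have [X0 HX0] := (usumP _ _).1 H e e0.
pose A := undup (g :: [seq p.1 | p <- X0]).
pose B := undup [seq p.2 | p <- mob K E0].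
pose J := (X0 `|` [fset q in [seq (x, y) | x <- A, y <- B]])%fset.
have := HX0 J (fsubsetUl _ _).
suff -> : \sum_(p <- J) conv_terms u v g p = u g by [].
have inJ : forall x y, x \in A -> y \in B -> (x, y) \in J.
  move=> x y xA yB; apply/fsetUP; right; rewrite inE /=.
  by apply/allpairsP; exists (x, y).
rewrite (bigID (fun p => (p.1 \in A) && (p.2 \in B))) /=.
rewrite [X in _ + X]big_seq_cond [X in _ + X]big1 ?addr0; last first.
  move=> p /andP[pJ hn]; rewrite /conv_terms.
  have pB : p.2 \notin B.
    apply: contra hn => pB; rewrite pB andbT.
    move/fsetUP: pJ => [pX0|]; first by rewrite mem_undup inE (map_f _ pX0) orbT.
    by rewrite inE /= => /allpairsP [[x y] /= [xA _ ->]].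
  by rewrite /v fs_out ?mulr0 ?if_same // -mem_undup.
rewrite (@rect _ _ _ _ fst snd pair _ _ _ J A B) //; [| by case | exact: undup_uniq | exact: undup_uniq].
rewrite (bigD1_seq g) ?undup_uniq //=; last by rewrite mem_undup inE eqxx.
have inner : forall x, \sum_(y <- B) conv_terms u v g (x, y) = u x * (x == g)%:R.
  move=> x; rewrite /conv_terms /=.
  rewrite (eq_bigr (fun y => u x * ((sl_op x y == g)%:R * v y))); last first.
    by move=> y _; case: eqP => _; rewrite ?mul1r ?mul0r ?mulr0.
  rewrite -mulr_sumr; congr (_ * _).
  rewrite -(PmP2 K fg cov) /Pm /v /fs.
  rewrite (eq_bigr (fun y => \sum_(p <- mob K E0) (sl_op x y == g)%:R * (p.1 * (p.2 == y)%:R)));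
    last by move=> y _; rewrite mulr_sumr.
  rewrite exchange_big /=; apply: eq_big_seq => p pm.
  rewrite (bigD1_seq p.2) ?undup_uniq //=; last by rewrite mem_undup (map_f _ pm).
  rewrite eqxx mulr1 big1 ?addr0; first by rewrite opC mulrC.
  by move=> y; rewrite eq_sym => /negbTE ->; rewrite !mulr0.
rewrite inner eqxx mulr1 big1 ?addr0 // => x /negbTE xg.
by rewrite inner xg mulr0.
Qed.
End Main.
Arguments cover {K L u}. Arguments u_fs {K L u} Hu {f E0}.

Lemma op_le_l {L : semilattice} {x y f : L} : sl_op x y = f -> sl_le f x.
Proof. by move=> <-; exact: sl_le_opl. Qed.
Lemma op_le_r {L : semilattice} {x y f : L} : sl_op x y = f -> sl_le f y.
Proof. by move=> <-; exact: sl_le_opr. Qed.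

Lemma sum_const_seq {T : Type} {V : zmodType} (s : seq T) (c : V) :
  \sum_(x <- s) c = c *+ size s.
Proof. by elim: s => [|? ? IH]; rewrite ?big_nil ?big_cons ?IH ?mulrS. Qed.

Lemma core {K : numFieldType} {L : semilattice} {V : normedModType K}
  (a b : L * L -> L) (mk : L -> L -> L * L)
  (Hmk : forall p, mk (a p) (b p) = p) (Ha : forall x y, a (mk x y) = x)
  (Hb : forall x y, b (mk x y) = y)
  (u nx : L -> K) (w : L -> V) (f : L) (Dl : seq L) :
  uniq Dl ->
  (forall e, sl_le f e -> e \notin Dl -> u e = 0) ->
  (forall i, \sum_(d <- Dl) u d * (sl_op d i == f)%:R = (i == f)%:R) ->
  (forall h, sl_le f h -> `|w h| <= nx h) ->
  has_usum (fun p => (if sl_op (a p) (b p) == f then u (a p) * nx (b p) else 0 : K^o))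
           (nx f : K^o) ->
  has_usum (fun p => if sl_op (a p) (b p) == f then u (a p) *: w (b p) else 0) (w f).
Proof.
move=> uD u0 uid wn HS; apply/usumP => eps eps0.
pose S := fun p => (if sl_op (a p) (b p) == f then u (a p) * nx (b p) else 0 : K^o).
pose T := fun p => if sl_op (a p) (b p) == f then u (a p) *: w (b p) else 0.
change (exists J0 : {fset (L * L)}, forall J : {fset (L * L)}, (J0 `<=` J)%fset ->
  `|w f - \sum_(p <- J) T p| < eps).
change (has_usum S (nx f : K^o)) in HS.
pose n := size Dl; pose c : K := (n.+1)%:R * 2.
have c0 : 0 < c by rewrite mulr_gt0 ?ltr0n.
pose dl := eps / c.
have dl0 : 0 < dl by rewrite divr_gt0.
have [X0 HX0] := (usumP _ _).1 HS dl dl0.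
pose I0 := undup (f :: [seq b p | p <- X0]).
pose J0 := (X0 `|` [fset q in [seq mk x y | x <- Dl, y <- I0]])%fset.
exists J0 => J HJ.
have inJ : forall x y, x \in Dl -> y \in I0 -> mk x y \in J.
  move=> x y xD yI; apply: (fsubsetP HJ); apply/fsetUP; right; rewrite inE /=.
  by apply/allpairsP; exists (x, y).
rewrite (bigID (fun p => (a p \in Dl) && (b p \in I0))) /=.
rewrite (@rect _ _ _ _ a b mk Hmk Ha Hb J Dl I0) //; last exact: undup_uniq.
have first : \sum_(x <- Dl) \sum_(y <- I0) T (mk x y) = w f.
  rewrite exchange_big /=.
  rewrite (eq_bigr (fun y => (y == f)%:R *: w y)); last first.
    move=> y _; rewrite -uid scaler_suml; apply: eq_bigr => x _.
    rewrite /T Ha Hb -scalerA; case: eqP => _; by rewrite ?scale1r ?scale0r ?mulr1 ?mulr0 ?scaler0.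
  rewrite (bigD1_seq f) ?undup_uniq //=; last by rewrite mem_undup inE eqxx.
  rewrite eqxx scale1r big1 ?addr0 // => y /negbTE ->; by rewrite scale0r.
rewrite first opprD addrA subrr sub0r normrN.
pose Q := fun p => (a p \in Dl) && (b p \notin I0).
have -> : \sum_(p <- J | ~~ ((a p \in Dl) && (b p \in I0))) T p =
          \sum_(p <- J | Q p) T p.
  rewrite big_mkcond [RHS]big_mkcond; apply: eq_bigr => p _; rewrite /Q.
  case: (boolP (a p \in Dl)) => aD /=; first by case: (b p \in I0).
  rewrite /T; case: eqP => // e; rewrite u0 ?scale0r //.
  exact: op_le_l e.
rewrite (big_group _ Dl _ a) //; last by move=> p /andP[].
apply: (le_lt_trans (ler_norm_sum _ _ _)).
apply: (le_lt_trans (y := \sum_(d <- Dl) (dl + dl))); last first.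
  rewrite sum_const_seq -mulr2n -mulrnA -mulr_natr /dl.
  rewrite mulrAC ltr_pdivrMr // ltr_pM2l // /c -natrM ltr_nat.
  by rewrite mulnC ltn_pmul2r.
apply: ler_sum => d _.
pose N := \sum_(p <- J | Q p && (a p == d)) (if sl_op d (b p) == f then nx (b p) else 0).
have N0 : 0 <= N.
  apply: sumr_ge0 => p _; case: eqP => // e.
  exact: le_trans (normr_ge0 _) (wn _ (op_le_r e)).
have step1 : `|\sum_(p <- J | Q p && (a p == d)) T p| <= `|u d| * N.
  apply: (le_trans (ler_norm_sum _ _ _)); rewrite mulr_sumr.
  apply: ler_sum => p /andP[_ /eqP ad].
  rewrite /T ad; case: eqP => e; last by rewrite normr0 mulr0.
  by rewrite normrZ ler_wpM2l // wn //; exact: op_le_r e.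
apply: (le_trans step1).
have step2 : `|u d| * N = `|\sum_(p <- J | Q p && (a p == d)) S p|.
  rewrite (eq_bigr (fun p => u d * (if sl_op d (b p) == f then nx (b p) else 0))); last first.
    by move=> p /andP[_ /eqP ad]; rewrite /S ad; case: eqP; rewrite ?mulr0.
  by rewrite -mulr_sumr normrM (ger0_norm N0).
rewrite step2; apply: ltW.
rewrite big_fset_condE.
set Jd := [fset _ in _ | _]%fset.
have dis : forall x, x \in Jd -> x \notin X0.
  move=> x; rewrite !inE => /andP[_ /andP[/andP[_ bI] _]]; apply: contra bI => xX0.
  by rewrite mem_undup inE (map_f _ xX0) orbT.
have h1 := HX0 X0 (fsubset_refl _).
have h2 := HX0 (X0 `|` Jd)%fset (fsubsetUl _ _).
rewrite big_fsetU_disj // in h2.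
move: h1 h2; set S0 := \sum_(p <- X0) _; set S1 := \sum_(p <- Jd) _ => h1 h2.
have -> : S1 = (nx f - S0) - (nx f - (S0 + S1)) by rewrite opprB addrC addrA addrNK addrC addKr.
by apply: (le_lt_trans (ler_normB _ _)); apply: ltrD.
Qed.

Lemma has_usum_eq {I : choiceType} {K : numFieldType} {V : normedModType K}
  (x1 x2 : I -> V) (s : V) : x1 =1 x2 -> has_usum x1 s -> has_usum x2 s.
Proof.
move=> e /usumP H; apply/usumP => ep ep0; have [J0 HJ] := H ep ep0.
exists J0 => J /HJ; by rewrite (eq_bigr _ (fun p _ => e p)).
Qed.

Theorem lemma2p6 (K : numFieldType) (L : semilattice) (D : sl_diagram K L)
  (u : L -> K) :
  l1_identity u ->
  forall x : forall e : L, dg_alg D e, in_convalg D x ->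
    left_act_is D u x x /\ right_act_is D x u x.
Proof.
move=> Hu x Hx.
have key : forall f, has_usum (left_act_terms D u x f) (x f) /\
                     has_usum (right_act_terms D x u f) (x f).
  move=> f.
  have [E0 cov] := cover Hu f.
  pose U := mob K E0.
  pose Dl := undup [seq p.2 | p <- U & sl_le f p.2].
  have uf := u_fs Hu cov.
  have uD : uniq Dl by exact: undup_uniq.
  have u0 : forall e, sl_le f e -> e \notin Dl -> u e = 0.
    move=> e fe eD; rewrite uf // fs_out //; apply: contra eD => /mapP [p pU ep].
    by rewrite ep in fe *; rewrite mem_undup; apply: map_f; rewrite mem_filter fe pU.
  have uid : forall i, \sum_(d <- Dl) u d * (sl_op d i == f)%:R = (i == f)%:R.
    move=> i; rewrite -(PmP2 K (sl_le_refl f) cov) /Pm -/U.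
    rewrite (eq_big_seq (fun d => \sum_(p <- U) p.1 * ((p.2 == d)%:R * (sl_op d i == f)%:R)));
      last first.
      move=> d; rewrite mem_undup => /mapP [p]; rewrite mem_filter => /andP[fp _] ->.
      by rewrite uf // /fs mulr_suml; apply: eq_bigr => q _; rewrite mulrA.
    rewrite exchange_big /=; apply: eq_big_seq => p pU; rewrite -mulr_sumr; congr (_ * _).
    case: (boolP (sl_le f p.2)) => fp.
      rewrite (bigD1_seq p.2) //=; last by rewrite mem_undup map_f // mem_filter fp pU.
      rewrite eqxx mul1r big1 ?addr0 // => d /negbTE; rewrite eq_sym => ->.
      by rewrite mul0r.
    have nf : (sl_op p.2 i == f) = false.
      by apply/negP => /eqP /op_le_l; rewrite (negbTE fp).
    rewrite nf big1 // => d _; case: eqP => [<-|]; by rewrite ?nf ?mulr0 ?mul0r.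
  pose nx := fun h => `|x h|.
  have nxl1 : in_l1 nx.
    case: Hx => M HM; exists M => J; rewrite /partial_sum /nx.
    under eq_bigr => i _ do rewrite normr_id.
    exact: HM.
  pose w := fun h => dg_phi D f h (x h).
  have wn : forall h, sl_le f h -> `|w h| <= nx h by move=> h fh; exact: dg_phi_contr.
  have [HSl HSr] := Hu.2 nx nxl1 f.
  have wf : w f = x f by exact: dg_phi_id.
  split.
  - apply: (has_usum_eq (fun p => if sl_op p.1 p.2 == f then u p.1 *: w p.2 else 0)).
      by move=> p; rewrite /left_act_terms opC.
    rewrite -wf; apply: (core fst snd pair _ _ _ u nx w f Dl uD u0 uid wn) => //; first by case.
  - apply: (@has_usum_eq _ _ _ (fun p : L * L => if sl_op p.2 p.1 == f then u p.2 *: w p.1 else 0)).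
      by move=> p; rewrite /right_act_terms opC.
    rewrite -wf; apply: (core snd fst (fun e h => (h, e)) _ _ _ u nx w f Dl uD u0 uid wn) => //;
      first by case.
    apply: (has_usum_eq _ _ _ _ HSr) => p; by rewrite /conv_terms opC mulrC.
by split => f; have [] := key f.
Qed.
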